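(* With $\ell_n=\Psi(L_n)$, $z_n=\Psi(Z_n)$, $h_n=\Psi(H_n)$ for $n\ge1$ and $\ell_0=z_0=h_0=1$: (i) $\ell_n=4\ell_{n-1}+\ell_{n-4}+\ell_{n-5}$ for $n\ge5$, with $\ell_0=1,\ell_1=5,\ell_2=20,\ell_3=79,\ell_4=317$; (ii) $z_n=3z_{n-1}+z_{n-2}+6z_{n-3}+7z_{n-4}+7z_{n-5}+5z_{n-6}+z_{n-7}$ for $n\ge7$, with $z_0=1,z_1=5,z_2=20,z_3=75,z_4=288,z_5=1105,z_6=4234$; (iii) $h_n=h_{n-1}+7h_{n-2}+12h_{n-3}+6h_{n-4}+7h_{n-5}+4h_{n-6}+2h_{n-7}$ for $n\ge7$, with $h_0=1,h_1=5,h_2=20,h_3=75,h_4=288,h_5=1094,h_6=4171$.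
   Context: A matching of a graph is a set of pairwise vertex-disjoint edges; it is maximal if it is not a proper subset of another matching. $\Psi(G)$ is the number of maximal matchings of $G$. A benzenoid system is a connected plane graph without cut-vertices in which every bounded face is a hexagon, any two hexagonal faces being either disjoint or sharing exactly one edge (then they are adjacent). It is catacondensed if no vertex lies in three hexagons, and a benzenoid chain if moreover no hexagon is adjacent to three other hexagons; its length is its number of hexagons. In a chain, the two hexagons adjacent to only one other hexagon are terminal, the rest interior. An interior hexagon has exactly two vertices of degree 2; it is straight if these are non-adjacent and kinky if they are adjacent. $L_n$ (polyacene) is the benzenoid chain of length $n$ all of whose interior hexagons are straight. $Z_n$ (zig-zag polyphenacene) is the benzenoid chain of length $n$ with all interior hexagons kinky and successive kinks turning alternately in opposite directions; $H_n$ (helicene) is the one of length $n$ with all interior hexagons kinky and all kinks turning in the same direction (viewed as an abstract graph). *)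

(* Defs.v *)
From mathcomp Require Import all_boot.
Set Implicit Arguments. Unset Strict Implicit. Unset Printing Implicit Defensive.

Definition is_matching (V : finType) (e : rel V) (M : {set {set V}}) : bool :=
  [forall E in M, exists u, exists v, e u v && (E == [set u; v])] &&
  [forall E in M, forall F in M, (E != F) ==> [disjoint E & F]].

Definition is_maximal_matching (V : finType) (e : rel V) (M : {set {set V}}) : bool :=
  is_matching e M &&
  [forall M' : {set {set V}}, (is_matching e M' && (M \subset M')) ==> (M' == M)].

Definition Psi (V : finType) (e : rel V) : nat :=
  #|[set M : {set {set V}} | is_maximal_matching e M]|.

(** Benzenoid chains of length n, built hexagon by hexagon on vertices
    0 .. 4n+1.  Vertices 0,1 form an edge of the first hexagon.  Hexagon k
    (k = 0..n-1) is the cycle a_k, 4k+2, 4k+3, 4k+4, 4k+5, b_k, where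
    (a_0,b_0) = (0,1) and hexagon k+1 is glued along the edge
    (4k+2+j, 4k+3+j) of hexagon k, with j = js k in {0,1,2}:
    j = 1 makes hexagon k straight, j = 0 / j = 2 make it kinky turning
    to one side / the other. *)
Definition attach (js : nat -> nat) (k : nat) : nat * nat :=
  if k is k'.+1 then (4 * k' + 2 + js k', 4 * k' + 3 + js k') else (0, 1).

Definition hex_edges (js : nat -> nat) (k : nat) : seq (nat * nat) :=
  let: (a, b) := attach js k in
  [:: (a, 4 * k + 2); (4 * k + 2, 4 * k + 3); (4 * k + 3, 4 * k + 4);
      (4 * k + 4, 4 * k + 5); (4 * k + 5, b)].

Definition chain_edges (js : nat -> nat) (n : nat) : seq (nat * nat) :=
  (0, 1) :: flatten [seq hex_edges js k | k <- iota 0 n].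

Definition chain_rel (js : nat -> nat) (n : nat) : rel 'I_(4 * n + 2) :=
  fun u v => ((val u, val v) \in chain_edges js n) ||
             ((val v, val u) \in chain_edges js n).

Arguments chain_rel js n : clear implicits.

(** L_n: all interior hexagons straight. *)
Definition polyacene_js (k : nat) : nat := 1.
(** Z_n: all interior hexagons kinky, kinks alternating in direction. *)
Definition zigzag_js (k : nat) : nat := if odd k then 2 else 0.
(** H_n: all interior hexagons kinky, kinks all in the same direction. *)
Definition helicene_js (k : nat) : nat := 0.

Definition ell (n : nat) : nat := if n is 0 then 1 else Psi (chain_rel polyacene_js n).
Definition zz (n : nat) : nat := if n is 0 then 1 else Psi (chain_rel zigzag_js n).
Definition hh (n : nat) : nat := if n is 0 then 1 else Psi (chain_rel helicene_js n).

(* Main.v *)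
Require Import Defs.
From mathcomp Require Import all_boot zify.
Set Implicit Arguments. Unset Strict Implicit. Unset Printing Implicit Defensive.

Definition inc (v : nat) (p : nat * nat) : bool := (p.1 == v) || (p.2 == v).
Definition dj (p q : nat * nat) : bool := ~~ inc p.1 q && ~~ inc p.2 q.
Definition cov (E : seq (nat * nat)) (b : seq bool) (v : nat) : bool :=
  has (inc v) (mask b E).
Definition mmb (E : seq (nat * nat)) (b : seq bool) : bool :=
  pairwise dj (mask b E) && all (fun p => cov E b p.1 || cov E b p.2) E.
Definition key (p : nat * nat) : nat * nat := (minn p.1 p.2, maxn p.1 p.2).

Definition es (N : nat) (p : nat * nat) : {set 'I_N} := [set u : 'I_N | inc (val u) p].

Lemma djC p q : dj p q = dj q p.
Proof. rewrite /dj /inc; case: p q => [p1 p2] [q1 q2] /=; lia. Qed.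

Lemma es_key N p q : p.1 < N -> p.2 < N -> q.1 < N -> q.2 < N ->
  es N p = es N q -> key p = key q.
Proof.
case: p q => [p1 p2] [q1 q2] /= h1 h2 h3 h4 E.
have mem x : x < N -> inc x (p1, p2) = inc x (q1, q2).
  move=> hx; have := congr1 (fun A : {set 'I_N} => Ordinal hx \in A) E; by rewrite !inE.
have a1 := mem _ h1; have a2 := mem _ h2; have a3 := mem _ h3; have a4 := mem _ h4.
move: a1 a2 a3 a4; rewrite /inc /key /= !eqxx /= ?orbT => a1 a2 a3 a4.
apply/eqP; rewrite xpair_eqE; lia.
Qed.

Lemma disjointP' (T : finType) (A B : {set T}) :
  reflect (forall x, x \in A -> x \in B -> False) [disjoint A & B].
Proof.
rewrite disjoint_subset; apply: (iffP subsetP) => H x.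
  by move=> /H; rewrite inE => /negP.
by move=> xA; rewrite inE; apply/negP => /(H x xA).
Qed.

Lemma es_disj N p q : p.1 < N -> p.2 < N ->
  [disjoint es N p & es N q] = dj p q.
Proof.
case: p => [p1 p2] /= h1 h2; apply/disjointP'/idP.
  move=> H; rewrite /dj /=; apply/andP; split; apply/negP => hq.
    by apply: (H (Ordinal h1)); rewrite inE // /inc /= eqxx.
  by apply: (H (Ordinal h2)); rewrite inE // /inc /= eqxx orbT.
rewrite /dj /= => /andP [n1 n2] x; rewrite !inE => /orP [] /eqP E1.
  by rewrite -E1 in n1 *; rewrite (negbTE n1).
by rewrite -E1 in n2 *; rewrite (negbTE n2).
Qed.

Definition Phi N (E : seq (nat * nat)) (b : seq bool) : {set {set 'I_N}} :=
  [set X : {set 'I_N} | has (fun p => es N p == X) (mask b E)].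

Lemma es_ord N (u v : 'I_N) : es N (val u, val v) = [set u; v].
Proof. by apply/setP => x; rewrite !inE /inc /= !val_eqE (eq_sym u) (eq_sym v). Qed.

Lemma es_swap N p : es N (p.2, p.1) = es N p.
Proof. by apply/setP => x; rewrite !inE /inc /= orbC. Qed.

Lemma pairwise_mem (T : eqType) (r : rel T) (s : seq T) x y :
  symmetric r -> pairwise r s -> x \in s -> y \in s -> x != y -> r x y.
Proof.
move=> rs; elim: s => //= z s IH /andP [/allP hz hs].
rewrite !inE => /orP [/eqP -> | xs] /orP [/eqP -> | ys].
- by rewrite eqxx.
- by move=> _; apply: hz.
- by move=> _; rewrite rs; apply: hz.
- by apply: IH.
Qed.

Lemma pairwise_key (s : seq (nat * nat)) (r : rel (nat * nat)) :
  uniq (map key s) -> {in s &, forall x y, key x != key y -> r x y} -> pairwise r s.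
Proof.
elim: s => //= z s IH /andP [nz us] H; apply/andP; split.
  apply/allP => y ys; apply: H; rewrite ?inE ?eqxx ?ys ?orbT //.
  by apply: contra nz => /eqP ->; apply: map_f.
apply: IH => // x y xs ys; apply: H; by rewrite inE ?xs ?ys orbT.
Qed.


Lemma edge_es N (e : rel 'I_N) (E : seq (nat * nat)) p :
  (forall u v, e u v = ((val u, val v) \in E) || ((val v, val u) \in E)) ->
  p.1 < N -> p.2 < N -> p \in E -> exists u, exists v, e u v && (es N p == [set u; v]).
Proof.
move=> he h1 h2 pE; exists (Ordinal h1), (Ordinal h2).
by rewrite he /= -surjective_pairing pE -(es_ord (Ordinal h1) (Ordinal h2)) /= -surjective_pairing eqxx.
Qed.

Lemma matching_elem N (e : rel 'I_N) (E : seq (nat * nat)) M X :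
  (forall u v, e u v = ((val u, val v) \in E) || ((val v, val u) \in E)) ->
  is_matching e M -> X \in M -> exists2 p, p \in E & X = es N p.
Proof.
move=> he /andP [/forallP H _] XM; have := H X; rewrite XM /=.
case/existsP => u /existsP [v /andP [euv /eqP ->]].
move: euv; rewrite he => /orP [h | h].
  by exists (val u, val v) => //; rewrite es_ord.
by exists (val v, val u) => //; rewrite es_ord setUC.
Qed.

Lemma Phi_M N (e : rel 'I_N) (E : seq (nat * nat)) M :
  (forall u v, e u v = ((val u, val v) \in E) || ((val v, val u) \in E)) ->
  is_matching e M -> Phi N E (map (fun p => es N p \in M) E) = M.
Proof.
move=> he hM; apply/setP => X; rewrite inE -filter_mask.
apply/hasP/idP.
  by case=> p; rewrite mem_filter => /andP [pM _] /eqP <-.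
move=> XM; case: (matching_elem he hM XM) => p pE Xp.
by exists p; rewrite ?mem_filter -?Xp ?XM ?pE ?eqxx.
Qed.

Lemma Phi_inj N (E : seq (nat * nat)) b :
  all (fun p => (p.1 < N) && (p.2 < N)) E -> uniq (map key E) -> size b = size E ->
  map (fun p => es N p \in Phi N E b) E = b.
Proof.
rewrite /Phi; elim: E b => [|p E IH] [|x b] //= /andP [/andP [h1 h2] hb] /andP [nk uk] [sz].
have nq q : q \in E -> (es N q == es N p) = false.
  move=> qE; apply/negbTE/negP => /eqP eq.
  have /allP/(_ q qE)/andP [q1 q2] := hb.
  move: (es_key q1 q2 h1 h2 eq) => kq; move: nk; by rewrite -kq map_f.
have tl : has (fun q => es N q == es N p) (mask b E) = false.
  by apply/hasP => -[q /mem_mask qE]; rewrite nq.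
congr cons.
  case: x; rewrite !inE /= ?eqxx //.
  idtac.
apply: etrans (IH b hb uk sz); apply/eq_in_map => q qE.
rewrite !inE; case: x => //=; rewrite eq_sym nq //.
Qed.

Lemma mem_Phi N E b X : (X \in Phi N E b) = has (fun p => es N p == X) (mask b E).
Proof. by rewrite inE. Qed.

Lemma matching_Phi N (e : rel 'I_N) (E : seq (nat * nat)) b :
  (forall u v, e u v = ((val u, val v) \in E) || ((val v, val u) \in E)) ->
  all (fun p => (p.1 < N) && (p.2 < N)) E -> uniq (map key E) ->
  is_matching e (Phi N E b) = pairwise dj (mask b E).
Proof.
move=> he hb hu.
have bd p : p \in E -> (p.1 < N) /\ (p.2 < N) by move=> pE; have /allP/(_ p pE)/andP := hb.
rewrite /is_matching.
have -> : [forall X in Phi N E b, exists u, exists v, e u v && (X == [set u; v])].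
  apply/forallP => X; apply/implyP; rewrite mem_Phi => /hasP [p /mem_mask pE /eqP <-].
  have [h1 h2] := bd p pE.
  have [u [v h]] := edge_es he h1 h2 pE.
  by apply/existsP; exists u; apply/existsP; exists v.
rewrite /=; apply/idP/idP.
  move=> /forallP H; apply: pairwise_key.
    by rewrite map_mask; apply: mask_uniq.
  move=> x y /[dup] xm /mem_mask xE /[dup] ym /mem_mask yE nk.
  have [x1 x2] := bd x xE; have [y1 y2] := bd y yE.
  have := H (es N x); rewrite mem_Phi.
  have -> : has (fun p => es N p == es N x) (mask b E) by apply/hasP; exists x.
  move=> /forallP /(_ (es N y)); rewrite mem_Phi.
  have -> : has (fun p => es N p == es N y) (mask b E) by apply/hasP; exists y.
  rewrite /= => /implyP H'; rewrite -(es_disj y x1 x2); apply: H'; apply/negP => /eqP exy; have kxy := es_key x1 x2 y1 y2 exy.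
  by rewrite kxy eqxx in nk.
move=> pw; apply/forallP => X; apply/implyP; rewrite mem_Phi => /hasP [p pm /eqP <-].
apply/forallP => Y; apply/implyP; rewrite mem_Phi => /hasP [q qm /eqP <-].
apply/implyP => ne.
have [p1 p2] := bd p (mem_mask pm).
rewrite es_disj //; apply: (pairwise_mem djC pw pm qm).
by apply: contra ne => /eqP ->.
Qed.

Lemma maxP N (e : rel 'I_N) M : is_matching e M ->
  reflect (forall u v, e u v -> [set u; v] \notin M ->
             exists2 Y, Y \in M & ~~ [disjoint [set u; v] & Y])
          (is_maximal_matching e M).
Proof.
move=> hM; rewrite /is_maximal_matching hM /=.
have [/forallP h1 /forallP h2] := andP hM.
apply: (iffP forallP).
  move=> H u v euv nin.
  case: (boolP [exists Y in M, ~~ [disjoint [set u; v] & Y]]).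
    by case/existsP => Y /andP [YM nd]; exists Y.
  rewrite negb_exists => /forallP nY.
  have dY Y : Y \in M -> [disjoint [set u; v] & Y].
    by move=> YM; have := nY Y; rewrite YM /= negbK.
  have := H ([set u; v] |: M).
  have -> : is_matching e ([set u; v] |: M).
    apply/andP; split.
      apply/forallP => X; apply/implyP => /setU1P [-> | XM].
        by apply/existsP; exists u; apply/existsP; exists v; rewrite euv eqxx.
      by have := h1 X; rewrite XM.
    apply/forallP => X; apply/implyP => /setU1P [-> | XM];
    apply/forallP => Y; apply/implyP => /setU1P [-> | YM]; apply/implyP => ne.
    - by rewrite eqxx in ne.
    - by apply: dY.
    - by rewrite disjoint_sym; apply: dY.
    - by have := h2 X; rewrite XM /= => /forallP /(_ Y); rewrite YM ne.
  rewrite subsetUr /= => /eqP eqM.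
  by move: nin; rewrite -eqM setU11.
move=> H M'; apply/implyP => /andP [hM' sub].
rewrite eqEsubset sub andbT; apply/subsetP => X XM'.
have [/forallP g1 /forallP g2] := andP hM'.
have := g1 X; rewrite XM' /= => /existsP [u /existsP [v /andP [euv /eqP eX]]].
apply/negPn/negP => XnM.
have [Y YM nd] := H u v euv (ltac:(by rewrite -eX)).
have YM' : Y \in M' by apply: (subsetP sub).
have ne : X != Y by apply: contra XnM => /eqP ->.
have := g2 X; rewrite XM' /= => /forallP /(_ Y); rewrite YM' ne /=.
by rewrite -eX in nd; rewrite (negbTE nd).
Qed.

Lemma maximal_Phi N (e : rel 'I_N) (E : seq (nat * nat)) b :
  (forall u v, e u v = ((val u, val v) \in E) || ((val v, val u) \in E)) ->
  all (fun p => (p.1 < N) && (p.2 < N)) E -> uniq (map key E) ->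
  is_maximal_matching e (Phi N E b) = mmb E b.
Proof.
move=> he hb hu.
have bd p : p \in E -> (p.1 < N) /\ (p.2 < N) by move=> pE; have /allP/(_ p pE)/andP := hb.
rewrite /mmb -(matching_Phi b he hb hu).
case: (boolP (is_matching e (Phi N E b))) => hM; last first.
  by rewrite /is_maximal_matching (negbTE hM).
rewrite /=; apply/(maxP hM)/allP.
  move=> H p pE; have [h1 h2] := bd p pE.
  have ep : es N p = [set Ordinal h1; Ordinal h2].
    by rewrite -es_ord /= -surjective_pairing.
  have euv : e (Ordinal h1) (Ordinal h2) by rewrite he /= -surjective_pairing pE.
  case: (boolP ([set Ordinal h1; Ordinal h2] \in Phi N E b)).
    rewrite mem_Phi -ep => /hasP [q qm /eqP eq].
    apply/orP; left; apply/hasP; exists q => //.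
    have : Ordinal h1 \in es N q by rewrite eq ep !inE eqxx.
    by rewrite inE.
  move=> /(H _ _ euv) [Y]; rewrite mem_Phi => /hasP [q qm /eqP <-].
  rewrite -ep es_disj // /dj negb_and !negbK => /orP [] hi.
    by apply/orP; left; apply/hasP; exists q.
  by apply/orP; right; apply/hasP; exists q.
move=> H u v euv nin.
have [p [pE ep]] : exists p, p \in E /\ es N p = [set u; v].
  move: euv; rewrite he => /orP [h | h].
    by exists (val u, val v); rewrite es_ord.
  by exists (val v, val u); rewrite es_ord setUC.
have [h1 h2] := bd p pE.
have : cov E b p.1 || cov E b p.2 by apply: H.
have cv x : has (inc x) (mask b E) -> inc x p ->
   exists2 Y, Y \in Phi N E b & ~~ [disjoint [set u; v] & Y].
  move=> /hasP [q qm iq] ip; exists (es N q).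
    by rewrite mem_Phi; apply/hasP; exists q.
  rewrite -ep es_disj // /dj negb_and !negbK.
  by move: ip iq; rewrite /inc => /orP [] /eqP <- ->; rewrite ?orbT.
by case/orP => hc; apply: (cv _ hc); rewrite /inc eqxx ?orbT.
Qed.

Lemma Psi_count N (e : rel 'I_N) (E : seq (nat * nat)) :
  (forall u v, e u v = ((val u, val v) \in E) || ((val v, val u) \in E)) ->
  all (fun p => (p.1 < N) && (p.2 < N)) E -> uniq (map key E) ->
  Psi e = #|[set b : (size E).-tuple bool | mmb E b]|.
Proof.
move=> he hb hu; rewrite /Psi.
have -> : [set M | is_maximal_matching e M] =
          [set Phi N E (val b) | b in [set b : (size E).-tuple bool | mmb E b]].
  apply/setP => M; rewrite inE; apply/idP/imsetP.
    move=> hM; have hm : is_matching e M by case/andP: hM.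
    have sz : size (map (fun p => es N p \in M) E) == size E by rewrite size_map.
    exists (Tuple sz).
      by rewrite inE -(maximal_Phi _ he hb hu) /= (Phi_M he hm).
    by rewrite /= (Phi_M he hm).
  by case=> b; rewrite inE => hb' ->; rewrite (maximal_Phi _ he hb hu).
rewrite card_in_imset // => b1 b2 _ _ eq; apply: val_inj.
have eq' : Phi N E (tval b1) = Phi N E (tval b2) := eq.
change (tval b1 = tval b2).
by rewrite -(Phi_inj hb hu (size_tuple b1)) eq' (Phi_inj hb hu (size_tuple b2)).
Qed.

Fixpoint lsts (k : nat) : seq (seq bool) :=
  if k is k'.+1 then [seq rcons l x | l <- lsts k', x <- [:: false; true]] else [:: [::]].

Lemma lstsS k : lsts k.+1 = [seq rcons l x | l <- lsts k, x <- [:: false; true]].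
Proof. by []. Qed.

Lemma lsts_uniq k : uniq (lsts k).
Proof.
elim: k => // k IH; rewrite lstsS; apply: allpairs_uniq => //.
by move=> [l x] [l' x'] _ _ /= /rcons_inj.
Qed.

Lemma mem_lsts k l : (l \in lsts k) = (size l == k).
Proof.
elim: k l => [|k IH] l; first by case: l.
rewrite lstsS; apply/allpairsP/idP.
  by case=> [[l' x] [/= h _ ->]]; rewrite size_rcons eqSS -IH.
case/lastP: l => [|l x] //; rewrite size_rcons eqSS => h.
by exists (l, x); split => //=; [rewrite IH | case: x].
Qed.

Lemma card_lsts k (P : pred (seq bool)) :
  #|[set b : k.-tuple bool | P b]| = \sum_(l <- lsts k) P l.
Proof.
rewrite cardsE -sum1_card big_mkcond /= -big_enum /=.
rewrite (eq_bigr (fun i : k.-tuple bool => nat_of_bool (P i))); last by move=> i _; rewrite unfold_in; case: (P i).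
rewrite -(big_map (fun t : k.-tuple bool => tval t) xpredT (fun l => nat_of_bool (P l))).
apply: perm_big; apply: uniq_perm.
- by rewrite map_inj_uniq ?enum_uniq //; apply: val_inj.
- exact: lsts_uniq.
move=> l; rewrite mem_lsts; apply/mapP/eqP.
  by case=> t _ ->; rewrite size_tuple.
by move=> h; exists (Tuple (introT eqP h)); rewrite ?mem_enum.
Qed.

Lemma sum_split k m (F : seq bool -> nat) :
  \sum_(l <- lsts (k + m)) F l = \sum_(l <- lsts k) \sum_(t <- lsts m) F (l ++ t).
Proof.
elim: m F => [|m IH] F.
  by rewrite addn0; apply: eq_bigr => l _; rewrite big_seq1 cats0.
rewrite addnS lstsS big_allpairs_dep IH; apply: eq_bigr => l _.
rewrite lstsS big_allpairs_dep; apply: eq_bigr => t _.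
by apply: eq_bigr => x _; rewrite rcons_cat.
Qed.

Lemma chain_edgesS js k : chain_edges js k.+1 = chain_edges js k ++ hex_edges js k.
Proof.
rewrite /chain_edges.
have -> : iota 0 k.+1 = iota 0 k ++ [:: k] by rewrite -addn1 iotaD.
by rewrite map_cat flatten_cat /= cats0.
Qed.

Lemma hexE js k : hex_edges js k =
  [:: ((attach js k).1, 4 * k + 2); (4 * k + 2, 4 * k + 3); (4 * k + 3, 4 * k + 4);
      (4 * k + 4, 4 * k + 5); (4 * k + 5, (attach js k).2)].
Proof. by rewrite /hex_edges; case: (attach js k). Qed.

Lemma attach_bd js k : (forall i, js i <= 2) ->
  ((attach js k).1 < 4 * k + 2) && ((attach js k).2 < 4 * k + 2).
Proof. move=> hj; case: k => [|k] //=; have := hj k; lia. Qed.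

Lemma attachS js k : attach js k.+1 = (4 * k + 2 + js k, 4 * k + 3 + js k).
Proof. by []. Qed.

Lemma chain_bd js k : (forall i, js i <= 2) ->
  all (fun p => (p.1 < 4 * k + 2) && (p.2 < 4 * k + 2)) (chain_edges js k).
Proof.
move=> hj; elim: k => [|k IH] //; rewrite chain_edgesS all_cat; apply/andP; split.
  by apply: sub_all IH => p; lia.
have := attach_bd k hj; rewrite hexE /=; lia.
Qed.

Lemma chain_uniq js k : (forall i, js i <= 2) -> uniq (map key (chain_edges js k)).
Proof.
move=> hj; elim: k => [|k IH] //; rewrite chain_edgesS map_cat cat_uniq IH andTb.
have hb := chain_bd k hj; have ha := attach_bd k hj.
apply/andP; split.
  apply/negP => /hasP [x /mapP [p pH ->] /mapP [q qE eq]].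
  have /allP/(_ q qE) := hb.
  have hH : all (fun p => (4 * k + 2 <= p.1) || (4 * k + 2 <= p.2)) (hex_edges js k).
    by rewrite hexE /=; lia.
  have /allP/(_ p pH) := hH; move: eq; rewrite /key => /eqP; rewrite xpair_eqE; lia.
rewrite hexE /key /= !inE !xpair_eqE; lia.
Qed.

Definition chk13 (F G : bool -> bool -> bool -> bool -> bool -> bool -> bool -> bool -> bool -> bool -> bool -> bool -> bool -> bool) :=
  all (fun l => F (nth false l 0) (nth false l 1) (nth false l 2) (nth false l 3) (nth false l 4)
                  (nth false l 5) (nth false l 6) (nth false l 7) (nth false l 8) (nth false l 9)
                  (nth false l 10) (nth false l 11) (nth false l 12) ==
                G (nth false l 0) (nth false l 1) (nth false l 2) (nth false l 3) (nth false l 4)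
                  (nth false l 5) (nth false l 6) (nth false l 7) (nth false l 8) (nth false l 9)
                  (nth false l 10) (nth false l 11) (nth false l 12)) (lsts 13).

Lemma chk13_ok F G : chk13 F G ->
  forall a1 a2 a3 a4 a5 a6 a7 a8 a9 a10 a11 a12 a13,
    F a1 a2 a3 a4 a5 a6 a7 a8 a9 a10 a11 a12 a13 = G a1 a2 a3 a4 a5 a6 a7 a8 a9 a10 a11 a12 a13.
Proof.
move=> /allP h a1 a2 a3 a4 a5 a6 a7 a8 a9 a10 a11 a12 a13.
by apply/eqP; apply: (h [:: a1; a2; a3; a4; a5; a6; a7; a8; a9; a10; a11; a12; a13]); rewrite mem_lsts.
Qed.


Definition state := (bool * bool * bool * bool * bool * bool)%type.
Definition fr k v := (4 * k + 2 <= v) && (v <= 4 * k + 5).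
Definition okk js k b :=
  pairwise dj (mask b (chain_edges js k.+1)) &&
  all (fun p => [|| cov (chain_edges js k.+1) b p.1, cov (chain_edges js k.+1) b p.2,
                   fr k p.1 | fr k p.2]) (chain_edges js k.+1).
Definition stt js k b : state :=
  let c := cov (chain_edges js k.+1) b in
  (c (4 * k + 2), c (4 * k + 3), c (4 * k + 4), c (4 * k + 5),
   ~~ c (4 * k + 2) && ~~ c (attach js k).1, ~~ c (4 * k + 5) && ~~ c (attach js k).2).
Definition sel (j : nat) (s : state) : bool :=
  let: (c1, c2, c3, c4, _, _) := s in
  match j with 0 => c1 | 1 => c2 | 2 => c3 | _ => c4 end.
Definition acc (s : state) : bool :=
  let: (c1, c2, c3, c4, na, nb) := s in
  [&& na ==> c1, nb ==> c4, c1 || c2, c2 || c3 & c3 || c4].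

Lemma mmb_acc js k b : (forall i, js i <= 2) ->
  mmb (chain_edges js k.+1) b = okk js k b && acc (stt js k b).
Proof.
move=> hj; rewrite /mmb /okk /stt /acc -andbA; congr (_ && _).
set E := chain_edges js k.+1; set c := cov E b.
have eE : E = chain_edges js k ++ hex_edges js k := chain_edgesS js k.
have hb := chain_bd k hj; have ha := attach_bd k hj.
rewrite eE !all_cat -andbA.
have -> : all (fun p => [|| c p.1, c p.2, fr k p.1 | fr k p.2]) (chain_edges js k) =
          all (fun p => c p.1 || c p.2) (chain_edges js k).
  apply: eq_in_all => p pE; have /allP/(_ p pE) := hb; rewrite /fr.
  case: p {pE} => p1 p2 /= h.
  have -> : (4 * k + 2 <= p1) = false by lia.
  have -> : (4 * k + 2 <= p2) = false by lia.
  by rewrite /= !orbF.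
congr (_ && _); rewrite hexE /= /fr.
move: ha; set a0 := (attach js k).1; set b0 := (attach js k).2 => ha.
have -> : (4 * k + 2 <= a0) = false by lia.
have -> : (4 * k + 2 <= b0) = false by lia.
rewrite !leqnn /= !(leq_add2l, andbT, orbT) /=.
by case: (c a0); case: (c b0); case: (c (4 * k + 2)); case: (c (4 * k + 3));
   case: (c (4 * k + 4)); case: (c (4 * k + 5)).
Qed.

Definition valid (j : nat) (s : state) (t : seq bool) : bool :=
  let: (c1, c2, c3, c4, na, nb) := s in
  let t1 := nth false t 0 in let t2 := nth false t 1 in let t3 := nth false t 2 in
  let t4 := nth false t 3 in let t5 := nth false t 4 in
  let ca := sel j s in let cb := sel j.+1 s in
  let d1 := [|| c1, t1 && (j == 0) | t5 && (j.+1 == 0)] in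
  let d2 := [|| c2, t1 && (j == 1) | t5 && (j.+1 == 1)] in
  let d3 := [|| c3, t1 && (j == 2) | t5 && (j.+1 == 2)] in
  let d4 := [|| c4, t1 && (j == 3) | t5 && (j.+1 == 3)] in
  [&& ~~ (t1 && t2), ~~ (t2 && t3), ~~ (t3 && t4), ~~ (t4 && t5),
      ~~ (t1 && ca), ~~ (t5 && cb), na ==> d1, nb ==> d4,
      d1 || d2, d2 || d3 & d3 || d4].

Definition nxt (j : nat) (s : state) (t : seq bool) : state :=
  let t1 := nth false t 0 in let t2 := nth false t 1 in let t3 := nth false t 2 in
  let t4 := nth false t 3 in let t5 := nth false t 4 in
  (t1 || t2, t2 || t3, t3 || t4, t4 || t5,
   ~~ (t1 || t2) && ~~ (sel j s || t1), ~~ (t4 || t5) && ~~ (sel j.+1 s || t5)).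

Lemma covS E H b t v : size b = size E -> cov (E ++ H) (b ++ t) v = cov E b v || cov H t v.
Proof. by move=> h; rewrite /cov mask_cat // has_cat. Qed.

Lemma cov5 e1 e2 e3 e4 e5 t1 t2 t3 t4 t5 v :
  cov [:: e1; e2; e3; e4; e5] [:: t1; t2; t3; t4; t5] v =
  [|| t1 && inc v e1, t2 && inc v e2, t3 && inc v e3, t4 && inc v e4 | t5 && inc v e5].
Proof. by case: t1; case: t2; case: t3; case: t4; case: t5; rewrite /cov /= ?orbF. Qed.

Lemma cov_out js k b v : (forall i, js i <= 2) -> 4 * k + 6 <= v ->
  cov (chain_edges js k.+1) b v = false.
Proof.
move=> hj hv; apply/negbTE/hasP => -[p /mem_mask pE].
have /allP/(_ p pE) := chain_bd k.+1 hj; case: p {pE} => p1 p2 /=; rewrite /inc /=; lia.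
Qed.

Lemma sttS js k b t : (forall i, js i <= 2) ->
  size b = size (chain_edges js k.+1) -> size t = 5 ->
  stt js k.+1 (b ++ t) = nxt (js k) (stt js k b) t.
Proof.
move=> hj szb; case: t => [|t1 [|t2 [|t3 [|t4 [|t5 [|]]]]]] // _.
rewrite /stt /nxt (chain_edgesS js k.+1).
have co v : 4 * k + 6 <= v -> cov (chain_edges js k.+1) b v = false.
  by move=> h; apply: cov_out.
rewrite hexE attachS.
have := hj k; move: (js k) (chain_edges js k.+1) szb co => j E szb co hj'.
rewrite /= !covS // !cov5 /inc /=.
rewrite !(co (4 * k.+1 + 2)) ?(co (4 * k.+1 + 3)) ?(co (4 * k.+1 + 4)) ?(co (4 * k.+1 + 5)); try lia.
case: j hj' => [|[|[|j]]] // _.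
- rewrite !addn0 /=; congr (_, _, _, _, _, _); lia.
- have -> : 4 * k + 2 + 1 = 4 * k + 3 by lia.
  have -> : 4 * k + 3 + 1 = 4 * k + 4 by lia.
  rewrite /=; congr (_, _, _, _, _, _); lia.
- have -> : 4 * k + 2 + 2 = 4 * k + 4 by lia.
  have -> : 4 * k + 3 + 2 = 4 * k + 5 by lia.
  rewrite /=; congr (_, _, _, _, _, _); lia.
Qed.


Lemma all5 (P : pred (nat * nat)) e1 e2 e3 e4 e5 t1 t2 t3 t4 t5 :
  all P (mask [:: t1; t2; t3; t4; t5] [:: e1; e2; e3; e4; e5]) =
  [&& t1 ==> P e1, t2 ==> P e2, t3 ==> P e3, t4 ==> P e4 & t5 ==> P e5].
Proof. by case: t1; case: t2; case: t3; case: t4; case: t5; rewrite /= ?andbT. Qed.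

Lemma pw5 (r : rel (nat * nat)) e1 e2 e3 e4 e5 t1 t2 t3 t4 t5 :
  pairwise r (mask [:: t1; t2; t3; t4; t5] [:: e1; e2; e3; e4; e5]) =
  [&& t1 && t2 ==> r e1 e2, t1 && t3 ==> r e1 e3, t1 && t4 ==> r e1 e4,
      t1 && t5 ==> r e1 e5, t2 && t3 ==> r e2 e3, t2 && t4 ==> r e2 e4,
      t2 && t5 ==> r e2 e5, t3 && t4 ==> r e3 e4, t3 && t5 ==> r e3 e5
    & t4 && t5 ==> r e4 e5].
Proof. by case: t1; case: t2; case: t3; case: t4; case: t5; rewrite /= ?andbT -?andbA. Qed.

Lemma allrel_dj (s1 s2 : seq (nat * nat)) :
  allrel dj s1 s2 = all (fun q => ~~ has (inc q.1) s1 && ~~ has (inc q.2) s1) s2.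
Proof.
rewrite allrelC; apply: eq_all => q /=.
elim: s1 => //= p s1 ->; move: (has (inc q.1) s1) (has (inc q.2) s1) => h1 h2.
rewrite /dj /inc; case: p q => [p1 p2] [q1 q2] /=.
rewrite ![q1 == _]eq_sym ![q2 == _]eq_sym.
by case: (p1 == q1); case: (p1 == q2); case: (p2 == q1); case: (p2 == q2); case: h1; case: h2.
Qed.


Ltac evalcmp := repeat match goal with
 | |- context [@eq_op ?T ?u ?v] =>
     let _ := constr:(u : nat) in let _ := constr:(v : nat) in
     first [ have -> : (u == v) = true by lia | have -> : (u == v) = false by lia ]
 | |- context [?u <= ?v] => first [ have -> : (u <= v) = true by lia | have -> : (u <= v) = false by lia ]
 end.

Lemma okkS js k b t : (forall i, js i <= 2) ->
  size b = size (chain_edges js k.+1) -> size t = 5 ->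
  okk js k.+1 (b ++ t) = okk js k b && valid (js k) (stt js k b) t.
Proof.
move=> hj szb; case: t => [|t1 [|t2 [|t3 [|t4 [|t5 [|]]]]]] // _.
have hb := chain_bd k hj; have ha := attach_bd k hj; have hj' := hj k.
rewrite /okk /stt /fr (chain_edgesS js k.+1) (chain_edgesS js k) !hexE attachS mulnSr.
rewrite (chain_edgesS js k) hexE in szb.
move: (chain_edges js k) (attach js k) (js k) (4 * k) szb hb ha hj' => E0 [a0 b0] j x szb hb /= ha hj'.
set E1 := E0 ++ _ in szb *.
rewrite mask_cat // pairwise_cat allrel_dj all5 pw5 all_cat.
under eq_all => p do rewrite !(covS _ _ _ szb).
have hc v : has (inc v) (mask b E1) = cov E1 b v by [].
rewrite !hc.
set T := [:: t1; t2; t3; t4; t5].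
set H := [:: (x + 2 + j, x + 4 + 2) & _].
have bd1 : all (fun p => (p.1 < x + 6) && (p.2 < x + 6)) E1.
  rewrite all_cat; apply/andP; split; last by rewrite /=; lia.
  by apply: sub_all hb => p; lia.
have co v : x + 6 <= v -> cov E1 b v = false.
  move=> h; apply/negbTE/hasP => -[p /mem_mask pE].
  have /allP/(_ p pE) := bd1; case: p {pE} => p1 p2 /=; rewrite /inc /=; lia.
have chf v : v < x + 2 -> cov H T v = false.
  by move=> h; rewrite /H /T cov5 /inc /=; lia.
have L1 : all (fun p : nat * nat => [|| cov E1 b p.1 || cov H T p.1, cov E1 b p.2 || cov H T p.2,
             x + 4 + 2 <= p.1 <= x + 4 + 5 | x + 4 + 2 <= p.2 <= x + 4 + 5]) E0 =
          all (fun p => cov E1 b p.1 || cov E1 b p.2) E0.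
  apply: eq_in_all => p pE; have /allP/(_ p pE) := hb.
  case: p {pE} => p1 p2 /= h; rewrite !chf; lia.
have L2 : all (fun p : nat * nat => [|| cov E1 b p.1, cov E1 b p.2,
             x + 2 <= p.1 <= x + 5 | x + 2 <= p.2 <= x + 5]) E0 =
          all (fun p => cov E1 b p.1 || cov E1 b p.2) E0.
  apply: eq_in_all => p pE; have /allP/(_ p pE) := hb.
  case: p {pE} => p1 p2 /= h; lia.
rewrite !(all_cat _ E0) L1 L2 /= /H /T !cov5 /dj /inc /=.
have c6 : cov E1 b (x + 4 + 2) = false by apply: co; lia.
have c7 : cov E1 b (x + 4 + 3) = false by apply: co; lia.
have c8 : cov E1 b (x + 4 + 4) = false by apply: co; lia.
have c9 : cov E1 b (x + 4 + 5) = false by apply: co; lia.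
rewrite c6 c7 c8 c9.
clear L1 L2 co chf hc bd1 hb szb c6 c7 c8 c9; rewrite /H /T /E1; clear H T E1; set E1 := E0 ++ _.
case: j hj' => [|[|[|j]]] // _.
- rewrite !addn0; evalcmp; rewrite /= ?andbT ?andbF ?orbT ?orbF ?andTb ?andFb ?orTb ?orFb.
  move: (pairwise _ _) (all _ E0) (cov E1 b a0) (cov E1 b b0) (cov E1 b (x + 2))
     (cov E1 b (x + 3)) (cov E1 b (x + 4)) (cov E1 b (x + 5)) => pw ae ca cb c2 c3 c4 c5.
  move: c2 c3 c4 c5 ca cb t5 t4 t3 t2 t1 ae pw; clear; apply: chk13_ok; by vm_compute.
- have -> : x + 2 + 1 = x + 3 by lia.
  have -> : x + 3 + 1 = x + 4 by lia.
  evalcmp; rewrite /= ?andbT ?andbF ?orbT ?orbF ?andTb ?andFb ?orTb ?orFb.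
  move: (pairwise _ _) (all _ E0) (cov E1 b a0) (cov E1 b b0) (cov E1 b (x + 2))
     (cov E1 b (x + 3)) (cov E1 b (x + 4)) (cov E1 b (x + 5)) => pw ae ca cb c2 c3 c4 c5.
  move: c2 c3 c4 c5 ca cb t5 t4 t3 t2 t1 ae pw; clear; apply: chk13_ok; by vm_compute.
- have -> : x + 2 + 2 = x + 4 by lia.
  have -> : x + 3 + 2 = x + 5 by lia.
  evalcmp; rewrite /= ?andbT ?andbF ?orbT ?orbF ?andTb ?andFb ?orTb ?orFb.
  move: (pairwise _ _) (all _ E0) (cov E1 b a0) (cov E1 b b0) (cov E1 b (x + 2))
     (cov E1 b (x + 3)) (cov E1 b (x + 4)) (cov E1 b (x + 5)) => pw ae ca cb c2 c3 c4 c5.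
  move: c2 c3 c4 c5 ca cb t5 t4 t3 t2 t1 ae pw; clear; apply: chk13_ok; by vm_compute.
Qed.




Definition code (sp : state * bool) : nat :=
  let: ((c1, c2, c3, c4, na, nb), p) := sp in
  c1 + 2 * (c2 + 2 * (c3 + 2 * (c4 + 2 * (na + 2 * (nb + 2 * p))))).
Definition decode (n : nat) : state * bool :=
  ((odd n, odd n./2, odd n./2./2, odd n./2./2./2, odd n./2./2./2./2, odd n./2./2./2./2./2),
   odd n./2./2./2./2./2./2).

Lemma codeK sp : decode (code sp) = sp.
Proof. by case: sp => [[[[[[[] []] []] []] []] []] []]. Qed.

Lemma code_lt sp : code sp < 128.
Proof. by case: sp => [[[[[[[] []] []] []] []] []] []]. Qed.

Fixpoint gtl (J : bool -> nat) (m : nat) : seq nat :=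
  if m is m'.+1 then
    let tab := gtl J m' in
    [seq (let sp := decode i in
          sumn [seq (valid (J sp.2) sp.1 t : nat) * nth 0 tab (code (nxt (J sp.2) sp.1 t, ~~ sp.2))
               | t <- lsts 5]) | i <- iota 0 128]
  else [seq (acc (decode i).1 : nat) | i <- iota 0 128].

Definition gtab J m sp := nth 0 (gtl J m) (code sp).

Lemma gtabS J m sp : gtab J m.+1 sp =
  \sum_(t <- lsts 5) (valid (J sp.2) sp.1 t : nat) * gtab J m (nxt (J sp.2) sp.1 t, ~~ sp.2).
Proof.
rewrite /gtab {1}/gtl -/gtl (nth_map 0); last by rewrite size_iota code_lt.
by rewrite nth_iota ?code_lt // add0n codeK sumnE big_map.
Qed.

Lemma gtab0 J sp : gtab J 0 sp = acc sp.1.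
Proof.
rewrite /gtab /gtl (nth_map 0); last by rewrite size_iota code_lt.
by rewrite nth_iota ?code_lt // add0n codeK.
Qed.

Lemma size_chain js k : size (chain_edges js k) = 5 * k + 1.
Proof.
elim: k => [|k IH] //; rewrite chain_edgesS size_cat IH hexE /=; lia.
Qed.

Definition GG js J k m :=
  \sum_(b <- lsts (size (chain_edges js k.+1))) (okk js k b : nat) * gtab J m (stt js k b, odd k).

Lemma GG_step js J k m : (forall i, js i <= 2) -> (forall i, js i = J (odd i)) ->
  GG js J k.+1 m = GG js J k m.+1.
Proof.
move=> hj hJ; rewrite /GG.
have -> : size (chain_edges js k.+2) = size (chain_edges js k.+1) + 5.
  by rewrite !size_chain; lia.
rewrite sum_split; apply: eq_big_seq => b; rewrite mem_lsts => /eqP sb.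
rewrite gtabS big_distrr; apply: eq_big_seq => t; rewrite mem_lsts => /eqP st.
rewrite -hJ okkS // sttS // [odd k.+1]/=.
by case: (okk js k b) => /=; rewrite ?mul0n ?mul1n.
Qed.

Lemma GG_shift js J k m : (forall i, js i <= 2) -> (forall i, js i = J (odd i)) ->
  GG js J k m = GG js J 0 (k + m).
Proof.
move=> hj hJ; elim: k m => [|k IH] m //.
by rewrite GG_step // IH addSnnS.
Qed.

Lemma Psi_GG js J k : (forall i, js i <= 2) -> (forall i, js i = J (odd i)) ->
  Psi (chain_rel js k.+1) = GG js J 0 k.
Proof.
move=> hj hJ; have := @GG_shift js J k 0 hj hJ; rewrite addn0 => <-.
rewrite (@Psi_count _ _ (chain_edges js k.+1)) //; last first.
- exact: chain_uniq.
- exact: chain_bd.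
rewrite card_lsts /GG; apply: eq_big_seq => b _.
rewrite mmb_acc // gtab0.
have -> : (stt js k b, odd k).1 = stt js k b by [].
by case: (okk js k b); case: (acc _).
Qed.

Lemma gtab_rec J (cs : seq (nat * nat)) d :
  (forall sp, gtab J d sp = \sum_(ci <- cs) ci.1 * gtab J ci.2 sp) ->
  forall m sp, gtab J (m + d) sp = \sum_(ci <- cs) ci.1 * gtab J (m + ci.2) sp.
Proof.
move=> h0; elim=> [|m IH] sp; first by rewrite add0n h0.
rewrite addSn gtabS.
under eq_bigr => t _ do rewrite IH big_distrr.
rewrite exchange_big; apply: eq_bigr => ci _.
rewrite addSn gtabS big_distrr; apply: eq_bigr => t _.
exact: mulnCA.
Qed.

Lemma GG_rec js J (cs : seq (nat * nat)) d :
  (forall sp, gtab J d sp = \sum_(ci <- cs) ci.1 * gtab J ci.2 sp) ->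
  forall m, GG js J 0 (m + d) = \sum_(ci <- cs) ci.1 * GG js J 0 (m + ci.2).
Proof.
move=> h0 m; rewrite /GG.
under eq_bigr => b _ do rewrite (gtab_rec h0) big_distrr.
rewrite exchange_big; apply: eq_bigr => ci _.
rewrite big_distrr; apply: eq_bigr => b _.
exact: mulnCA.
Qed.

Definition chkrec J (cs : seq (nat * nat)) d : bool :=
  let gd := gtl J d in
  let gs := [seq (ci.1, gtl J ci.2) | ci <- cs] in
  all (fun i => nth 0 gd i == sumn [seq p.1 * nth 0 p.2 i | p <- gs]) (iota 0 128).

Lemma chkrecP J cs d : chkrec J cs d ->
  forall sp, gtab J d sp = \sum_(ci <- cs) ci.1 * gtab J ci.2 sp.
Proof.
rewrite /chkrec => /allP h sp; rewrite /gtab.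
have /eqP -> := h (code sp) (ltac:(by rewrite mem_iota code_lt)).
by rewrite sumnE !big_map.
Qed.

Lemma GG_sumn js J k :
  GG js J 0 k = let tab := gtl J k in
    sumn [seq (okk js 0 b : nat) * nth 0 tab (code (stt js 0 b, false)) | b <- lsts 6].
Proof. by rewrite /GG; cbv zeta; rewrite sumnE big_map. Qed.

Definition Jl (p : bool) := 1.
Definition Jz (p : bool) := if p then 2 else 0.
Definition Jh (p : bool) := 0.

Lemma chk_l : chkrec Jl [:: (4, 4); (1, 1); (1, 0)] 5.
Proof. by vm_compute. Qed.
Lemma chk_z : chkrec Jz [:: (3, 6); (1, 5); (6, 4); (7, 3); (7, 2); (5, 1); (1, 0)] 7.
Proof. by vm_compute. Qed.
Lemma chk_h : chkrec Jh [:: (1, 6); (7, 5); (12, 4); (6, 3); (7, 2); (4, 1); (2, 0)] 7.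
Proof. by vm_compute. Qed.

Lemma ellE n : 0 < n -> ell n = GG polyacene_js Jl 0 n.-1.
Proof. by case: n => // n _; apply: Psi_GG. Qed.
Lemma zzE n : 0 < n -> zz n = GG zigzag_js Jz 0 n.-1.
Proof. by case: n => // n _; apply: Psi_GG => // i; rewrite /zigzag_js; case: (odd i). Qed.
Lemma hhE n : 0 < n -> hh n = GG helicene_js Jh 0 n.-1.
Proof. by case: n => // n _; apply: Psi_GG. Qed.

Lemma ell_vals : [/\ ell 1 = 5, ell 2 = 20, ell 3 = 79, ell 4 = 317 & ell 5 = 1274].
Proof. by rewrite !ellE // !GG_sumn; split; vm_compute. Qed.
Lemma zz_vals : [/\ zz 1 = 5, zz 2 = 20, zz 3 = 75, zz 4 = 288 &
  [/\ zz 5 = 1105, zz 6 = 4234 & zz 7 = 16226]].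
Proof. by rewrite !zzE // !GG_sumn; split; [..|split]; vm_compute. Qed.
Lemma hh_vals : [/\ hh 1 = 5, hh 2 = 20, hh 3 = 75, hh 4 = 288 &
  [/\ hh 5 = 1094, hh 6 = 4171 & hh 7 = 15897]].
Proof. by rewrite !hhE // !GG_sumn; split; [..|split]; vm_compute. Qed.

Theorem corollary4p5 :
  [/\ (forall n, 5 <= n ->
         ell n = 4 * ell (n - 1) + ell (n - 4) + ell (n - 5))
      /\ [/\ ell 0 = 1, ell 1 = 5, ell 2 = 20, ell 3 = 79 & ell 4 = 317],
      (forall n, 7 <= n ->
         zz n = 3 * zz (n - 1) + zz (n - 2) + 6 * zz (n - 3) + 7 * zz (n - 4)
                + 7 * zz (n - 5) + 5 * zz (n - 6) + zz (n - 7))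
      /\ (zz 0 = 1 /\ zz 1 = 5 /\ zz 2 = 20 /\ zz 3 = 75 /\ zz 4 = 288
          /\ zz 5 = 1105 /\ zz 6 = 4234) &
      (forall n, 7 <= n ->
         hh n = hh (n - 1) + 7 * hh (n - 2) + 12 * hh (n - 3) + 6 * hh (n - 4)
                + 7 * hh (n - 5) + 4 * hh (n - 6) + 2 * hh (n - 7))
      /\ (hh 0 = 1 /\ hh 1 = 5 /\ hh 2 = 20 /\ hh 3 = 75 /\ hh 4 = 288
          /\ hh 5 = 1094 /\ hh 6 = 4171)].
Proof.
have [l1 l2 l3 l4 l5] := ell_vals.
have [z1 z2 z3 z4 [z5 z6 z7]] := zz_vals.
have [h1 h2 h3 h4 [h5 h6 h7]] := hh_vals.
split.
- split; last by split.
  move=> n hn; have [->|hn6] : n = 5 \/ 6 <= n by lia.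
    by rewrite l5 (_ : 5 - 1 = 4) // l4 (_ : 5 - 4 = 1) // l1.
  rewrite !ellE; try lia.
  have [m em] : exists m, n.-1 = m + 5 by exists (n - 6); lia.
  have -> : (n - 1).-1 = m + 4 by lia.
  have -> : (n - 4).-1 = m + 1 by lia.
  have -> : (n - 5).-1 = m + 0 by lia.
  rewrite em (GG_rec _ (chkrecP chk_l)) !big_cons big_nil /=; lia.
- split; last by do !split.
  move=> n hn; have [->|hn8] : n = 7 \/ 8 <= n by lia.
    by rewrite z7 (_ : 7 - 1 = 6) // z6 (_ : 7 - 2 = 5) // z5 (_ : 7 - 3 = 4) // z4
      (_ : 7 - 4 = 3) // z3 (_ : 7 - 5 = 2) // z2 (_ : 7 - 6 = 1) // z1.
  rewrite !zzE; try lia.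
  have [m em] : exists m, n.-1 = m + 7 by exists (n - 8); lia.
  have -> : (n - 1).-1 = m + 6 by lia.
  have -> : (n - 2).-1 = m + 5 by lia.
  have -> : (n - 3).-1 = m + 4 by lia.
  have -> : (n - 4).-1 = m + 3 by lia.
  have -> : (n - 5).-1 = m + 2 by lia.
  have -> : (n - 6).-1 = m + 1 by lia.
  have -> : (n - 7).-1 = m + 0 by lia.
  rewrite em (GG_rec _ (chkrecP chk_z)) !big_cons big_nil /=; lia.
- split; last by do !split.
  move=> n hn; have [->|hn8] : n = 7 \/ 8 <= n by lia.
    by rewrite h7 (_ : 7 - 1 = 6) // h6 (_ : 7 - 2 = 5) // h5 (_ : 7 - 3 = 4) // h4
      (_ : 7 - 4 = 3) // h3 (_ : 7 - 5 = 2) // h2 (_ : 7 - 6 = 1) // h1.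
  rewrite !hhE; try lia.
  have [m em] : exists m, n.-1 = m + 7 by exists (n - 8); lia.
  have -> : (n - 1).-1 = m + 6 by lia.
  have -> : (n - 2).-1 = m + 5 by lia.
  have -> : (n - 3).-1 = m + 4 by lia.
  have -> : (n - 4).-1 = m + 3 by lia.
  have -> : (n - 5).-1 = m + 2 by lia.
  have -> : (n - 6).-1 = m + 1 by lia.
  have -> : (n - 7).-1 = m + 0 by lia.
  rewrite em (GG_rec _ (chkrecP chk_h)) !big_cons big_nil /=; lia.
Qed.
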